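(* Assume $x_j(0)<\tau$ and $y_j(0)=0$ for all individuals $j$. Then the system is in the no action state if and only if $\sigma_A\max_j\alpha_j-\sigma_S\mu_S\le 0$, i.e. the individual with the largest $\alpha$ satisfies $\sigma_A\alpha_i-\sigma_S\mu_S\le 0$.
   Context: Model: Fix an integer $n\ge 2$ (number of individuals) and parameters $\sigma_A,\sigma_S\ge 0$, $\sigma_C>0$, $\mu_S\in[0,1]$, $\mu_C>0$, $r>0$, $\tau\in(0,1)$, $\alpha_1,\dots,\alpha_n\in(-1,1)$. Individual $i$ has state $(x_i(t),y_i(t))$, $x_i\in(-1,1)$, $y_i\in[0,1]$, and $\gamma_i(t)=\frac{1}{n-1}\sum_{j\neq i}y_j(t)$. Between action events the state evolves by $\dot x_i=[\sigma_A\alpha_i+\sigma_S(\gamma_i-\mu_S)]\,\sigma_C(\gamma_i+\mu_C)(1-x_i)(1+x_i)$, $\dot y_i=-ry_i$. Individual $i$ ''acts'' at a time $t$ when $x_i(t)$ reaches the threshold $\tau$ (i.e. $x_i(t)\ge\tau$); immediately afterwards $x_i$ is reset to $0$ and $y_i$ is reset to $1$, and the continuous evolution resumes from the new state. The system is in the ''no action state'' if no individual ever acts. *)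

(* Defs.v *)
From Stdlib Require Import Reals List.
From Coquelicot Require Import Coquelicot.
Import ListNotations.
Open Scope R_scope.

Definition gamma (n : nat) (y : nat -> R -> R) (i : nat) (t : R) : R :=
  / INR (n - 1) *
  fold_right Rplus 0
    (map (fun j => y j t) (filter (fun j => negb (Nat.eqb j i)) (seq 0 n))).

(* max_{j < n} alpha_j  (n >= 1 assumed where used) *)
Definition alpha_max (n : nat) (alpha : nat -> R) : R :=
  fold_right Rmax (alpha 0%nat) (map alpha (seq 0 n)).

(* A solution on [0, +oo) of the continuous (between-actions) evolution,
   i.e. without any reset: right-continuous at 0, and satisfying the ODEs
   at every t > 0. *)
Definition flow_solution (n : nat) (sA sS sC muS muC r : R)
    (alpha : nat -> R) (x y : nat -> R -> R) : Prop :=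
  forall i, (i < n)%nat ->
    filterlim (x i) (at_right 0) (locally (x i 0)) /\
    filterlim (y i) (at_right 0) (locally (y i 0)) /\
    (forall t, 0 < t ->
       is_derive (x i) t
         ((sA * alpha i + sS * (gamma n y i t - muS))
            * (sC * (gamma n y i t + muC))
            * ((1 - x i t) * (1 + x i t)))
       /\ is_derive (y i) t (- r * y i t)).

(* No action state: starting from (x0, y0), the continuous evolution never
   brings any x_i to the threshold tau (the first action would occur at the
   first time some x_i(t) >= tau along this evolution). *)
Definition no_action_state (n : nat) (sA sS sC muS muC r tau : R)
    (alpha x0 y0 : nat -> R) : Prop :=
  forall x y : nat -> R -> R,
    flow_solution n sA sS sC muS muC r alpha x y ->
    (forall i, (i < n)%nat -> x i 0 = x0 i /\ y i 0 = y0 i) ->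
    forall i t, (i < n)%nat -> 0 <= t -> x i t < tau.

(* Main.v *)
Require Import Defs.
From Stdlib Require Import Reals List Lra Lia.
From Coquelicot Require Import Coquelicot.
Open Scope R_scope.
Lemma mono_lim (g d : R -> R) (l : R) :
  filterlim g (at_right 0) (locally l) ->
  (forall t, 0 < t -> is_derive g t (d t) /\ d t <= 0) ->
  forall t, 0 < t -> g t <= l.
Proof.
  intros Hl Hd t Ht.
  assert (Hmono : forall e, 0 < e < t -> g t <= g e).
  { intros e He.
    destruct (MVT_gen g e t d) as [c [Hc Heq]].
    - intros x Hx. rewrite Rmin_left in Hx by lra. rewrite Rmax_right in Hx by lra.
      apply Hd; lra.
    - intros x Hx. rewrite Rmin_left in Hx by lra. rewrite Rmax_right in Hx by lra.
      apply continuity_pt_filterlim. apply (@ex_derive_continuous R_AbsRing R_NormedModule).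
      exists (d x). apply Hd; lra.
    - rewrite Rmin_left in Hc by lra. rewrite Rmax_right in Hc by lra.
      destruct (Hd c ltac:(lra)) as [_ Hdc].
      assert (d c * (t - e) <= 0) by (apply Rmult_le_0_r; lra). lra. }
  destruct (Rle_or_lt (g t) l) as [H|H]; [exact H|exfalso].
  assert (Heps : 0 < g t - l) by lra.
  specialize (Hl (ball l (mkposreal _ Heps)) (locally_ball _ _)).
  destruct Hl as [delta Hdel].
  set (u := Rmin (delta/2) (t/2)).
  assert (Hu0 : 0 < u). { unfold u. apply Rmin_glb_lt; destruct delta; simpl; lra. }
  assert (Hu1 : u <= delta/2) by apply Rmin_l.
  assert (Hu2 : u <= t/2) by apply Rmin_r.
  assert (Hb : ball 0 delta u).
  { unfold ball; simpl; unfold AbsRing_ball, abs, minus, plus, opp; simpl.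
    rewrite Ropp_0, Rplus_0_r, Rabs_pos_eq by lra. destruct delta; simpl in *; lra. }
  specialize (Hdel u Hb Hu0).
  unfold ball in Hdel; simpl in Hdel; unfold AbsRing_ball, abs, minus, plus, opp in Hdel; simpl in Hdel.
  apply Rabs_def2 in Hdel.
  pose proof (Hmono u ltac:(lra)). lra.
Qed.
Lemma fold_max_ge (alpha : nat -> R) d l j : In j l ->
  alpha j <= fold_right Rmax d (map alpha l).
Proof.
  induction l as [|a l IH]; simpl; [tauto|].
  intros [->|H]. apply Rmax_l. eapply Rle_trans; [apply IH, H|apply Rmax_r].
Qed.

Lemma fold_max_attained (alpha : nat -> R) d l :
  fold_right Rmax d (map alpha l) = d \/
  exists j, In j l /\ fold_right Rmax d (map alpha l) = alpha j.
Proof.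
  induction l as [|a l IH]; simpl; [auto|].
  destruct (Rle_lt_dec (alpha a) (fold_right Rmax d (map alpha l))) as [Hle|Hlt].
  - rewrite Rmax_right by exact Hle. destruct IH as [H|[j [Hj H]]]; [left; auto| right; exists j; auto].
  - rewrite Rmax_left by lra. right; exists a; auto.
Qed.

Lemma alpha_max_ge n alpha j : (j < n)%nat -> alpha j <= alpha_max n alpha.
Proof. intros H. apply fold_max_ge. apply in_seq. lia. Qed.

Lemma alpha_max_attained n alpha : (1 <= n)%nat ->
  exists i, (i < n)%nat /\ alpha_max n alpha = alpha i.
Proof.
  intros Hn. destruct (fold_max_attained alpha (alpha 0%nat) (seq 0 n)) as [H|[j [Hj H]]].
  - exists 0%nat. split; [lia|exact H].
  - exists j. apply in_seq in Hj. split; [lia|exact H].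
Qed.

Lemma gamma_zero n y i t : (forall j, (j < n)%nat -> y j t = 0) -> gamma n y i t = 0.
Proof.
  intros H. unfold gamma.
  assert (fold_right Rplus 0 (map (fun j => y j t) (filter (fun j => negb (Nat.eqb j i)) (seq 0 n))) = 0).
  { assert (Hin : forall j, In j (filter (fun j => negb (Nat.eqb j i)) (seq 0 n)) -> (j < n)%nat).
    { intros j Hj. apply filter_In in Hj. destruct Hj as [Hj _]. apply in_seq in Hj. lia. }
    revert Hin. generalize (filter (fun j => negb (Nat.eqb j i)) (seq 0 n)).
    induction l as [|a l IH]; simpl; intros Hin; [reflexivity|].
    rewrite H by (apply Hin; auto). rewrite IH by (intros; apply Hin; auto). ring. }
  rewrite H0. ring.
Qed.
Definition T (u : R) := 1 - 2 / (exp (2*u) + 1).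
Lemma is_derive_T u : is_derive T u ((1 - T u) * (1 + T u)).
Proof.
  unfold T. pose proof (exp_pos (2*u)).
  auto_derive. lra. field. lra.
Qed.

Lemma cont_of_derive (f : R -> R) x l : is_derive f x l -> continuity_pt f x.
Proof. intros H. apply continuity_pt_filterlim. apply (@ex_derive_continuous R_AbsRing R_NormedModule). exists l; exact H. Qed.

Lemma right_below (f : R -> R) (l tau t : R) : filterlim f (at_right 0) (locally l) -> l < tau -> 0 < t ->
  exists e, 0 < e < t /\ f e < tau.
Proof.
  intros Hl Hlt Ht.
  assert (Heps : 0 < tau - l) by lra.
  specialize (Hl (ball l (mkposreal _ Heps)) (locally_ball _ _)).
  destruct Hl as [delta Hdel].
  set (u := Rmin (delta/2) (t/2)).
  assert (Hu0 : 0 < u). { unfold u. apply Rmin_glb_lt; destruct delta; simpl; lra. }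
  assert (Hu1 : u <= delta/2) by apply Rmin_l.
  assert (Hu2 : u <= t/2) by apply Rmin_r.
  assert (Hb : ball 0 delta u).
  { unfold ball; simpl; unfold AbsRing_ball, abs, minus, plus, opp; simpl.
    rewrite Ropp_0, Rplus_0_r, Rabs_pos_eq by lra. destruct delta; simpl in *; lra. }
  specialize (Hdel u Hb Hu0).
  unfold ball in Hdel; simpl in Hdel; unfold AbsRing_ball, abs, minus, plus, opp in Hdel; simpl in Hdel.
  apply Rabs_def2 in Hdel. exists u; split; lra.
Qed.

Definition F (u : R) := u - u*u*u/3.

Lemma y_zero n sA sS sC muS muC r alpha x y y0 :
  0 < r ->
  flow_solution n sA sS sC muS muC r alpha x y ->
  (forall j, (j < n)%nat -> y j 0 = y0 j) ->
  (forall j, (j < n)%nat -> y0 j = 0) ->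
  forall j u, (j < n)%nat -> 0 <= u -> y j u = 0.
Proof.
  intros Hr Hflow Hinit Hy0 j u Hj Hu.
  assert (H0 : y j 0 = 0) by (rewrite Hinit, Hy0 by exact Hj; reflexivity).
  destruct (Req_dec u 0) as [->|Hu0]; [exact H0|].
  destruct (Hflow j Hj) as [_ [Hyl Hd]].
  assert (Hle : y j u * y j u <= 0).
  { apply (mono_lim (fun v => y j v * y j v) (fun v => scal (- r * y j v) (2 * y j v))).
    - rewrite H0 in Hyl.
      assert (Hc : filterlim (fun z => z*z) (locally 0) (locally (0*0))).
      { apply (continuity_pt_filterlim (fun z => z*z) 0). apply (cont_of_derive _ _ (2*0)). auto_derive; auto; ring. }
      rewrite Rmult_0_l in Hc.
      apply (filterlim_comp _ _ _ (y j) (fun z => z*z) _ (locally 0)); [exact Hyl|exact Hc].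
    - intros v Hv. split.
      + apply (is_derive_comp (fun z => z*z) (y j)). auto_derive; auto; ring. apply Hd; exact Hv.
      + unfold scal; simpl; unfold mult; simpl. nra.
    - lra. }
  nra.
Qed.

Lemma backward n sA sS sC muS muC r tau alpha x0 y0 :
  (2 <= n)%nat -> 0 <= sA -> 0 <= sS -> 0 < sC -> 0 < muC -> 0 < r -> tau < 1 ->
  (forall j, (j < n)%nat -> -1 < x0 j < 1) ->
  (forall j, (j < n)%nat -> x0 j < tau) ->
  (forall j, (j < n)%nat -> y0 j = 0) ->
  sA * alpha_max n alpha - sS * muS <= 0 ->
  no_action_state n sA sS sC muS muC r tau alpha x0 y0.
Proof.
  intros Hn HsA HsS HsC HmuC Hr Htau Hx0 Hx0tau Hy0 Hc x y Hflow Hinit i t Hi Ht.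
  assert (Hy : forall j u, (j < n)%nat -> 0 <= u -> y j u = 0).
  { apply (y_zero n sA sS sC muS muC r alpha x y y0 Hr Hflow); auto.
    intros j Hj; apply Hinit, Hj. }
  destruct (Hinit i Hi) as [Hxi0 _].
  destruct (Req_dec t 0) as [->|Ht0]; [rewrite Hxi0; apply Hx0tau, Hi|].
  destruct (Rlt_or_le (x i t) tau) as [Hlt|Hge]; [exact Hlt|exfalso].
  destruct (Hflow i Hi) as [Hxl [_ Hd]].
  rewrite Hxi0 in Hxl.
  destruct (right_below (x i) (x0 i) tau t Hxl (Hx0tau i Hi) ltac:(lra)) as [e [He Hxe]].
  assert (Hu : exists u, 0 < u /\ x i u = tau).
  { destruct (Req_dec (x i t) tau) as [Heq|Hne]; [exists t; split; [lra|exact Heq]|].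
    destruct (IVT_Rbar_incr (x i) e t (x i e) (x i t) tau) as [u [Hu1 [Hu2 Hu3]]].
    - apply is_lim_continuity. apply (cont_of_derive _ _ _ (proj1 (Hd e ltac:(lra)))).
    - apply is_lim_continuity. apply (cont_of_derive _ _ _ (proj1 (Hd t ltac:(lra)))).
    - intros v Hv1 Hv2. simpl in Hv1, Hv2. apply (cont_of_derive _ _ _ (proj1 (Hd v ltac:(lra)))).
    - simpl; lra.
    - simpl; lra.
    - exists u. simpl in Hu1. split; [lra|exact Hu3]. }
  destruct Hu as [u [Hu0 Hxu]].
  assert (HK : sA * alpha i + sS * (0 - muS) <= 0).
  { pose proof (alpha_max_ge n alpha i Hi). nra. }
  assert (HF : F (x i u) <= F (x0 i)).
  { apply (mono_lim (fun v => F (x i v))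
      (fun v => scal ((sA * alpha i + sS * (gamma n y i v - muS))
            * (sC * (gamma n y i v + muC)) * ((1 - x i v) * (1 + x i v))) (1 - x i v * x i v))).
    - assert (Hc' : filterlim F (locally (x0 i)) (locally (F (x0 i)))).
      { apply (continuity_pt_filterlim F). apply (cont_of_derive _ _ (1 - x0 i * x0 i)).
        unfold F. auto_derive; auto; field. }
      apply (filterlim_comp _ _ _ (x i) F _ (locally (x0 i))); [exact Hxl|exact Hc'].
    - intros v Hv. split.
      + apply (is_derive_comp F (x i)). unfold F. auto_derive; auto; field. apply Hd; exact Hv.
      + unfold scal; simpl; unfold mult; simpl.
        rewrite gamma_zero by (intros j Hj; apply Hy; [exact Hj|lra]).
        assert (0 < sC * (0 + muC)) by (apply Rmult_lt_0_compat; lra).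
        assert (0 <= (1 - x i v) * (1 + x i v) * (1 - x i v * x i v)).
        { replace ((1 - x i v) * (1 + x i v) * (1 - x i v * x i v)) with ((1 - x i v * x i v)*(1 - x i v * x i v)) by ring.
          apply Rle_0_sqr. }
        assert ((sA * alpha i + sS * (0 - muS)) * (sC * (0 + muC)) <= 0) by nra.
        nra.
    - exact Hu0. }
  rewrite Hxu in HF. unfold F in HF.
  destruct (Hx0 i Hi). pose proof (Hx0tau i Hi).
  assert (0 < tau - x0 i) by lra.
  assert (tau*tau < 1) by nra. assert (x0 i * x0 i < 1) by nra.
  assert (tau * x0 i <= (tau*tau + x0 i * x0 i)/2) by nra.
  assert (tau*tau + tau * x0 i + x0 i * x0 i < 3) by lra.
  assert (F tau - F (x0 i) = (tau - x0 i) * (1 - (tau*tau + tau * x0 i + x0 i * x0 i)/3)) by (unfold F; field).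
  unfold F in *. nra.
Qed.

Lemma T_atanh z : -1 < z < 1 -> T (ln ((1 + z) / (1 - z)) / 2) = z.
Proof.
  intros Hz. unfold T.
  replace (2 * (ln ((1 + z) / (1 - z)) / 2)) with (ln ((1 + z) / (1 - z))) by field.
  rewrite exp_ln. field. split; lra.
  apply Rdiv_lt_0_compat; lra.
Qed.

Lemma T_mono u v : u <= v -> T u <= T v.
Proof.
  intros H. unfold T.
  assert (exp (2*u) <= exp (2*v)).
  { destruct (Rle_lt_or_eq_dec _ _ H) as [Hl| ->]; [|lra].
    left; apply exp_increasing; lra. }
  pose proof (exp_pos (2*u)).
  assert (2 / (exp (2*v) + 1) <= 2 / (exp (2*u) + 1)).
  { unfold Rdiv. apply Rmult_le_compat_l; [lra|]. apply Rinv_le_contravar; lra. }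
  lra.
Qed.

Lemma forward n sA sS sC muS muC r tau alpha x0 y0 :
  (2 <= n)%nat -> 0 < sC -> 0 < muC -> 0 < tau < 1 ->
  (forall j, (j < n)%nat -> -1 < x0 j < 1) ->
  (forall j, (j < n)%nat -> y0 j = 0) ->
  no_action_state n sA sS sC muS muC r tau alpha x0 y0 ->
  sA * alpha_max n alpha - sS * muS <= 0.
Proof.
  intros Hn HsC HmuC Htau Hx0 Hy0 Hna.
  destruct (Rle_or_lt (sA * alpha_max n alpha - sS * muS) 0) as [H|Hpos]; [exact H|exfalso].
  destruct (alpha_max_attained n alpha ltac:(lia)) as [i [Hi Hmax]].
  set (k := fun j => (sA * alpha j - sS * muS) * (sC * muC)).
  set (a := fun j => ln ((1 + x0 j) / (1 - x0 j)) / 2).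
  set (x := fun j t => T (k j * t + a j)).
  set (y := fun (j : nat) (t : R) => 0).
  assert (Hflow : flow_solution n sA sS sC muS muC r alpha x y).
  { intros j Hj. split; [|split].
    - apply (filterlim_filter_le_1 (F := locally 0)); [apply filter_le_within|].
      apply continuity_pt_filterlim.
      apply (cont_of_derive _ _ (scal (k j) ((1 - T (k j * 0 + a j)) * (1 + T (k j * 0 + a j))))).
      apply (is_derive_comp T (fun t => k j * t + a j)); [apply is_derive_T|].
      auto_derive; auto; ring.
    - unfold y. exact (@filterlim_const R R_UniformSpace (at_right 0) _ 0).
    - intros t Ht. rewrite gamma_zero by reflexivity. split.
      + replace ((sA * alpha j + sS * (0 - muS)) * (sC * (0 + muC)) * ((1 - x j t) * (1 + x j t)))
          with (scal (k j) ((1 - T (k j * t + a j)) * (1 + T (k j * t + a j)))).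
        * apply (is_derive_comp T (fun t => k j * t + a j)); [apply is_derive_T|].
          auto_derive; auto; ring.
        * unfold scal; simpl; unfold mult; simpl. unfold x, k. ring.
      + replace (- r * y j t) with (@zero R_AbsRing) by (unfold y; simpl; unfold zero; simpl; ring).
        apply (is_derive_const (K := R_AbsRing) (V := R_NormedModule)). }
  assert (Hinit : forall j, (j < n)%nat -> x j 0 = x0 j /\ y j 0 = y0 j).
  { intros j Hj. split.
    - unfold x, a. rewrite Rmult_0_r, Rplus_0_l. apply T_atanh, Hx0, Hj.
    - unfold y. rewrite Hy0 by exact Hj. reflexivity. }
  set (b := ln ((1 + tau) / (1 - tau)) / 2).
  assert (Hk : 0 < k i) by (unfold k; rewrite <- Hmax; apply Rmult_lt_0_compat; [lra|apply Rmult_lt_0_compat; lra]).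
  set (t := Rmax 0 ((b - a i) / k i)).
  assert (Ht0 : 0 <= t) by apply Rmax_l.
  assert (Ht1 : (b - a i) / k i <= t) by apply Rmax_r.
  pose proof (Hna x y Hflow Hinit i t Hi Ht0) as Hlt.
  assert (b <= k i * t + a i).
  { apply (Rmult_le_compat_l (k i)) in Ht1; [|lra].
    replace (k i * ((b - a i) / k i)) with (b - a i) in Ht1 by (field; lra). lra. }
  assert (HT : T b <= x i t) by (apply T_mono; assumption).
  unfold b in HT. rewrite T_atanh in HT by lra. lra.
Qed.

Theorem corollary4 (n : nat) (sA sS sC muS muC r tau : R)
    (alpha x0 y0 : nat -> R)
    (Hn : (2 <= n)%nat)
    (HsA : 0 <= sA) (HsS : 0 <= sS) (HsC : 0 < sC)
    (HmuS : 0 <= muS <= 1) (HmuC : 0 < muC) (Hr : 0 < r)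
    (Htau : 0 < tau < 1)
    (Halpha : forall j, (j < n)%nat -> -1 < alpha j < 1)
    (Hx0 : forall j, (j < n)%nat -> -1 < x0 j < 1)
    (Hx0tau : forall j, (j < n)%nat -> x0 j < tau)
    (Hy0 : forall j, (j < n)%nat -> y0 j = 0) :
  no_action_state n sA sS sC muS muC r tau alpha x0 y0 <->
  sA * alpha_max n alpha - sS * muS <= 0.
Proof.
  split.
  - apply forward; auto.
  - apply backward; auto; lra.
Qed.
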